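(* Robust ex-post stability does not imply ex-ante stability: there exist a set $N$ of $n$ agents and a set $O$ of $n$ objects with strict preferences $\succ_i$ over $O$ ($i\in N$) and strict priorities $\succ_o$ over $N$ ($o\in O$), and a random matching $p$, such that $p$ is robust ex-post stable but not ex-ante stable.
   Context: A random matching is an $n\times n$ bistochastic matrix $p=[p(i,o)]_{i\in N,o\in O}$ (nonnegative entries, every row and every column summing to $1$); it is deterministic if all entries lie in $\{0,1\}$. A decomposition of $p$ is a representation $p=\sum_{j=1}^k\lambda_jP_j$ with $P_j$ deterministic matchings, $\lambda_j\in(0,1]$, $\sum_j\lambda_j=1$. A deterministic matching $p$ is stable if there exist no $i,j\in N$, $o,o'\in O$ with $p(i,o')=1$, $p(j,o)=1$, $o\succ_i o'$, $i\succ_o j$. A random matching $p$ is ex-ante stable if there exist no $i,j\in N$, $o,o'\in O$ with $p(i,o')>0$, $p(j,o)>0$, $o\succ_i o'$, $i\succ_o j$; it is robust ex-post stable if every decomposition of $p$ consists only of stable deterministic matchings. *)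

(* Defs.v *)
From mathcomp Require Import all_boot all_order all_algebra.
From mathcomp Require Import Rstruct.
From Stdlib Require Import Reals.
Set Implicit Arguments. Unset Strict Implicit. Unset Printing Implicit Defensive.
Import Order.TTheory GRing.Theory Num.Theory.
Local Open Scope ring_scope.

Definition strict_order (T : finType) (r : rel T) : Prop :=
  (forall x, ~~ r x x) /\
  (forall x y z, r x y -> r y z -> r x z) /\
  (forall x y, x != y -> r x y || r y x).

(* a random matching: bistochastic n x n real matrix p(i,o) *)
Definition bistochastic (n : nat) (p : 'M[R]_n) : Prop :=
  (forall i o, 0 <= p i o) /\
  (forall i, \sum_(o < n) p i o = 1) /\
  (forall o, \sum_(i < n) p i o = 1).

Definition deterministic (n : nat) (p : 'M[R]_n) : Prop :=
  bistochastic p /\ (forall i o, p i o = 0 \/ p i o = 1).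

(* pref i o o' : o is strictly preferred to o' by agent i;
   prio o i j : i has strictly higher priority than j at object o *)
Definition stable_det (n : nat) (pref : 'I_n -> rel 'I_n)
  (prio : 'I_n -> rel 'I_n) (p : 'M[R]_n) : Prop :=
  ~ exists i j o o', [/\ p i o' = 1, p j o = 1, pref i o o' & prio o i j].

Definition ex_ante_stable (n : nat) (pref : 'I_n -> rel 'I_n)
  (prio : 'I_n -> rel 'I_n) (p : 'M[R]_n) : Prop :=
  ~ exists i j o o', [/\ 0 < p i o', 0 < p j o, pref i o o' & prio o i j].

Definition decomposition (n : nat) (p : 'M[R]_n) (k : nat)
  (lam : 'I_k -> R) (P : 'I_k -> 'M[R]_n) : Prop :=
  (forall j, deterministic (P j)) /\
  (forall j, 0 < lam j <= 1) /\
  (\sum_(j < k) lam j = 1) /\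
  (p = \sum_(j < k) lam j *: P j).

Definition robust_ex_post_stable (n : nat) (pref : 'I_n -> rel 'I_n)
  (prio : 'I_n -> rel 'I_n) (p : 'M[R]_n) : Prop :=
  forall (k : nat) (lam : 'I_k -> R) (P : 'I_k -> 'M[R]_n),
    decomposition p lam P -> forall j, stable_det pref prio (P j).

(* Main.v *)
Require Import Defs.
From mathcomp Require Import all_boot all_order all_algebra.
From mathcomp Require Import Rstruct.
From Stdlib Require Import Reals.
From mathcomp Require Import lra.
Set Implicit Arguments. Unset Strict Implicit. Unset Printing Implicit Defensive.
Import Order.TTheory GRing.Theory Num.Theory.
Local Open Scope ring_scope.

Definition O0 : 'I_3 := @Ordinal 3 0 isT.
Definition O1 : 'I_3 := @Ordinal 3 1 isT.
Definition O2 : 'I_3 := @Ordinal 3 2 isT.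

Lemma ord3P (x : 'I_3) : x = O0 \/ x = O1 \/ x = O2.
Proof.
case: x => [[|[|[|m]]] Hm].
- by left; apply: val_inj.
- by right; left; apply: val_inj.
- by right; right; apply: val_inj.
- by [].
Qed.

Lemma sum3 (F : 'I_3 -> R) : \sum_(i < 3) F i = F O0 + F O1 + F O2.
Proof.
rewrite !big_ord_recr big_ord0 /= add0r.
by congr (F _ + F _ + F _); apply: val_inj.
Qed.

(* ranking lists: first = best *)
Definition rk (l : seq nat) (o : 'I_3) : nat := index (nat_of_ord o) l.
Definition prefl (i : nat) : seq nat :=
  match i with 0 => [:: 0; 1; 2] | 1 => [:: 0; 1; 2] | _ => [:: 2; 1; 0] end%N.
Definition priol (o : nat) : seq nat :=
  match o with 0 => [:: 2; 0; 1] | 1 => [:: 0; 2; 1] | _ => [:: 0; 1; 2] end%N.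
Definition pref (i : 'I_3) : rel 'I_3 := fun o o' => ltn (rk (prefl i) o) (rk (prefl i) o').
Definition prio (o : 'I_3) : rel 'I_3 := fun i j => ltn (rk (priol o) i) (rk (priol o) j).

Definition posb (i o : nat) : bool := (o == i) || (o == modn i.+1 3).
Definition pm : 'M[R]_3 := \matrix_(i < 3, o < 3) (if posb i o then 2^-1 else 0).

Lemma pm_zero (x y : 'I_3) : ~~ posb x y -> pm x y = 0.
Proof. by rewrite mxE => /negbTE ->. Qed.

Lemma pm_pos (x y : 'I_3) : posb x y -> pm x y = 2^-1.
Proof. by rewrite mxE => ->. Qed.

Lemma supp n (p : 'M[R]_n) k (lam : 'I_k -> R) P :
  decomposition p lam P -> forall j x y, p x y = 0 -> P j x y = 0.
Proof.
move=> [HD [Hl [_ Hp]]] j x y.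
rewrite Hp summxE => /eqP; rewrite psumr_eq0; last first.
  move=> i _; rewrite mxE; apply: mulr_ge0.
    by case/andP: (Hl i) => /ltW.
  by case: (HD i) => [[H _] _].
move=> /allP /(_ j (mem_index_enum _)) /=; rewrite mxE mulf_eq0 => /orP [|/eqP //].
by case/andP: (Hl j) => /lt0r_neq0 /negbTE ->.
Qed.

Lemma strict3 (l : seq nat) : perm_eq l [:: 0; 1; 2]%N ->
  strict_order (fun o o' : 'I_3 => ltn (rk l o) (rk l o')).
Proof.
move=> Hl; split; first by move=> x; rewrite /ltn /= ltnn.
split; first by move=> x y z; apply: ltn_trans.
move=> x y Hxy; rewrite -neq_ltn; apply: contra Hxy => /eqP E.
apply/eqP/val_inj; move: E; rewrite /rk.
have hx : nat_of_ord x \in l by rewrite (perm_mem Hl); case: (ord3P x) => [->|[->|->]].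
have hy : nat_of_ord y \in l by rewrite (perm_mem Hl); case: (ord3P y) => [->|[->|->]].
move=> E; change (nat_of_ord x = nat_of_ord y).
by rewrite -(nth_index 0%N hx) E nth_index.
Qed.

Theorem proposition4 :
  exists (n : nat) (pref : 'I_n -> rel 'I_n) (prio : 'I_n -> rel 'I_n)
         (p : 'M[R]_n),
    (forall i, strict_order (pref i)) /\
    (forall o, strict_order (prio o)) /\
    bistochastic p /\
    robust_ex_post_stable pref prio p /\
    ~ ex_ante_stable pref prio p.
Proof.
exists 3%N, pref, prio, pm.
split.
  move=> i; apply: strict3; by case: (ord3P i) => [->|[->|->]].
split.
  move=> i; apply: strict3; by case: (ord3P i) => [->|[->|->]].
split.
  split.
    move=> i o; rewrite mxE; case: ifP => _ //; rewrite invr_ge0; lra.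
  split.
    move=> i; rewrite sum3 !mxE.
    case: (ord3P i) => [->|[->|->]] /=; lra.
  move=> o; rewrite sum3 !mxE.
  case: (ord3P o) => [->|[->|->]] /=; lra.
split; last first.
  move=> H; apply: H; exists O2, O1, O1, O0.
  by rewrite !pm_pos //; split => //; rewrite invr_gt0; lra.
move=> k lam P HD j0 [i [j [o [o' [H1 H2 Hpr Hpi]]]]].
have Hs := supp HD j0.
have Z : forall x y : 'I_3, ~~ posb x y -> P j0 x y = 0.
  by move=> x y h; apply: Hs; apply: pm_zero.
case: HD => [HD _]; case: (HD j0) => [[Hnn [Hr Hc]] _].
have R0 := Hr O0; have C0 := Hc O0; have C1 := Hc O1.
rewrite sum3 in R0; rewrite sum3 in C0; rewrite sum3 in C1.
have a := Hnn O0 O0; have b := Hnn O1 O0; have c := Hnn O0 O1; have d := Hnn O2 O1.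
have e := Z O0 O2 isT.
move: H1 H2 Hpr Hpi.
case: (ord3P i) => [->|[->|->]]; case: (ord3P j) => [->|[->|->]]; case: (ord3P o) => [->|[->|->]]; case: (ord3P o') => [->|[->|->]] //= H1 H2 _ _;
  try (by move: H1; rewrite Z //; move/eqP; rewrite eq_sym oner_eq0);
  try (by move: H2; rewrite Z //; move/eqP; rewrite eq_sym oner_eq0).
lra.
Qed.
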